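(* Let $p_1,\ldots,p_n,q_1,\ldots,q_n\in(0,1]$ and $c>0$ satisfy \[ \left(\frac{p_1+q_1}{2}\cdots\frac{p_n+q_n}{2}\right)^2\le c\,p_1\cdots p_n\,q_1\cdots q_n . \] Then $\sum_{i=1}^n(p_i-q_i)^2\le O(\log c)$, where the constant in $O(\cdot)$ is absolute.
   Context: Logarithms are binary. *)

(* Defs.v *)
From Stdlib Require Import Reals.
Open Scope R_scope.

Fixpoint prodR (f : nat -> R) (n : nat) : R :=
  match n with
  | O => 1
  | S m => prodR f m * f m
  end.

Fixpoint sumR (f : nat -> R) (n : nat) : R :=
  match n with
  | O => 0
  | S m => sumR f m + f m
  end.

Definition log2 (x : R) : R := ln x / ln 2.

(* Main.v *)
Require Import Defs.
From Stdlib Require Import Reals Lra Psatz.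
Open Scope R_scope.

Lemma exp_small (d : R) : 0 <= d <= 1 -> exp (d/5) <= 1 + d/4.
Proof.
  intros Hd.
  assert (H1 : 1 + (- (d/5)) <= exp (- (d/5))) by apply exp_ineq1_le.
  assert (Hp : 0 < exp (d/5)) by apply exp_pos.
  assert (Hm : exp (- (d/5)) * exp (d/5) = 1).
  { rewrite <- exp_plus. replace (- (d/5) + d/5) with 0 by ring. apply exp_0. }
  assert (H2 : exp (d/5) * (1 - d/5) <= 1) by nra.
  nra.
Qed.

Lemma step (a b : R) : 0 < a <= 1 -> 0 < b <= 1 ->
  exp ((a-b)^2/5) * a * b <= ((a+b)/2)^2.
Proof.
  intros Ha Hb.
  assert (Hd : 0 <= (a-b)^2 <= 1).
  { split; [apply pow2_ge_0|]. assert (-1 <= a-b <= 1) by lra. simpl. nra. }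
  pose proof (exp_small _ Hd) as He.
  assert (Hab : 0 < a*b <= 1) by nra.
  assert (E : ((a+b)/2)^2 = a*b + (a-b)^2/4) by field.
  rewrite E.
  assert (exp ((a-b)^2/5) * (a*b) <= (1 + (a-b)^2/4) * (a*b)).
  { apply Rmult_le_compat_r; lra. }
  nra.
Qed.

Lemma main_ind (n : nat) (p q : nat -> R) :
  (forall i, (i < n)%nat -> 0 < p i <= 1) ->
  (forall i, (i < n)%nat -> 0 < q i <= 1) ->
  0 < prodR p n /\ 0 < prodR q n /\
  exp (sumR (fun i => (p i - q i) ^ 2) n / 5) * prodR p n * prodR q n
    <= (prodR (fun i => (p i + q i) / 2) n) ^ 2.
Proof.
  induction n as [|n IH]; intros Hp Hq; cbn [prodR sumR].
  - rewrite Rdiv_0_l, exp_0. lra.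
  - destruct IH as [P1 [P2 P3]].
    + intros; apply Hp; lia.
    + intros; apply Hq; lia.
    + assert (hp := Hp n ltac:(lia)). assert (hq := Hq n ltac:(lia)).
      pose proof (step _ _ hp hq) as S.
      split; [nra|split; [nra|]].
      replace ((sumR (fun i => (p i - q i) ^ 2) n + (p n - q n) ^ 2) / 5)
        with (sumR (fun i => (p i - q i) ^ 2) n / 5 + (p n - q n) ^ 2 / 5) by field.
      rewrite exp_plus.
      set (X := exp (sumR (fun i => (p i - q i) ^ 2) n / 5)) in *.
      set (Y := exp ((p n - q n) ^ 2 / 5)) in *.
      set (Z := prodR (fun i => (p i + q i) / 2) n) in *.
      assert (0 <= X * prodR p n * prodR q n) by (left; unfold X; repeat apply Rmult_lt_0_compat; try apply exp_pos; lra).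
      assert (0 <= Y * p n * q n) by (left; unfold Y; repeat apply Rmult_lt_0_compat; try apply exp_pos; lra).
      replace (X * Y * (prodR p n * p n) * (prodR q n * q n))
        with ((X * prodR p n * prodR q n) * (Y * p n * q n)) by ring.
      replace ((Z * ((p n + q n) / 2)) ^ 2) with (Z^2 * ((p n + q n) / 2)^2) by ring.
      apply Rmult_le_compat; lra.
Qed.

Theorem lemma3 :
  exists K : R, forall (n : nat) (p q : nat -> R) (c : R),
    (forall i, (i < n)%nat -> 0 < p i <= 1) ->
    (forall i, (i < n)%nat -> 0 < q i <= 1) ->
    0 < c ->
    (prodR (fun i => (p i + q i) / 2) n) ^ 2 <= c * prodR p n * prodR q n ->
    sumR (fun i => (p i - q i) ^ 2) n <= K * log2 c.
Proof.
  exists (5 * ln 2).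
  intros n p q c Hp Hq Hc H.
  destruct (main_ind n p q Hp Hq) as [P1 [P2 P3]].
  set (S := sumR (fun i => (p i - q i) ^ 2) n) in *.
  assert (HB : 0 < prodR p n * prodR q n) by nra.
  assert (He : exp (S/5) <= c).
  { apply (Rmult_le_reg_r (prodR p n * prodR q n)); [exact HB|]. nra. }
  assert (Hl : S/5 <= ln c).
  { rewrite <- (ln_exp (S/5)). destruct (Req_dec (exp (S/5)) c) as [E|E]; [rewrite E; lra|]. left. apply ln_increasing; [apply exp_pos|lra]. }
  assert (Hl2 : 0 < ln 2) by (rewrite <- ln_1; apply ln_increasing; lra).
  unfold log2.
  replace (5 * ln 2 * (ln c / ln 2)) with (5 * ln c) by (field; lra).
  lra.
Qed.
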